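(* Let $P:\mathcal C^{op}\to\mathbf{Heyt}$ be a weak hyperdoctrine with comprehensive diagonals and let $A$ be an object of $\mathcal C$. Then $P$ satisfies the Axiom of Choice on $A$ if and only if its elementary quotient completion $\overline P$ satisfies the Axiom of Choice on $(A,\delta_A)$.
   Context: An elementary doctrine on $\mathcal C$ with finite products is $P:\mathcal C^{op}\to\mathbf{InfSL}$ with equality predicates $\delta_A\in P(A\times A)$ (written $a=_Aa'$) such that $\alpha\mapsto P_{\langle pr_1,pr_2\rangle}(\alpha)\wedge P_{\langle pr_2,pr_3\rangle}(\delta_A)$ is left adjoint to $P_{\langle pr_1,pr_2,pr_2\rangle}$. A weak hyperdoctrine is an elementary doctrine such that $\mathcal C$ is weakly cartesian closed (for all $A,B$ there is $W$ and $ev:W\times A\to B$ such that every $C\times A\to B$ is $ev\circ(g\times\mathrm{id}_A)$ for some, not necessarily unique, $g$), the fibres are Heyting algebras with Heyting reindexing, and reindexing along projections has left and right adjoints $\exists,\forall$ satisfying Beck–Chevalley. Comprehensive diagonals: $f,g:X\to Y$ are equal whenever $x:X\mid\top\vdash f(x)=_Yg(x)$. The Axiom of Choice holds on $A$ if for every object $B$ and $R\in P(A\times B)$: $\forall a:A.\exists b:B.R(a,b)\vdash\exists f:W.\forall a:A.R(a,ev(f,a))$ with $ev:W\times A\to B$ a weak evaluation. The elementary quotient completion $\overline P:\mathcal Q_P^{op}\to\mathbf{InfSL}$ has objects $(A,\rho)$ with $\rho$ a $P$-equivalence relation, arrows equivalence classes of $\rho$-$\sigma$-preserving arrows (with $f\sim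 g$ iff $\rho(a,a')\vdash\sigma(f(a),g(a'))$), and $\overline P(A,\rho)=\{\alpha\in P(A)\mid\alpha(a)\wedge\rho(a,a')\vdash\alpha(a')\}$. *)

(* Defs.v *)
Record CatData := {
  Ob : Type;
  Hom : Ob -> Ob -> Type;
  idm : forall A, Hom A A;
  comp : forall A B C, Hom B C -> Hom A B -> Hom A C;   (* comp g f = g o f *)
  term : Ob;
  bang : forall A, Hom A term;
  prod : Ob -> Ob -> Ob;
  p1 : forall A B, Hom (prod A B) A;
  p2 : forall A B, Hom (prod A B) B;
  pair : forall X A B, Hom X A -> Hom X B -> Hom X (prod A B)
}.
Arguments Hom {c} _ _.
Arguments idm {c} _.
Arguments comp {c A B C} _ _.
Arguments term {c}.
Arguments bang {c} _.
Arguments prod {c} _ _.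
Arguments p1 {c A B}.
Arguments p2 {c A B}.
Arguments pair {c X A B} _ _.

Record CatLaws (C : CatData) : Prop := {
  comp_assoc : forall (A B X Y : Ob C) (f : Hom A B) (g : Hom B X) (h : Hom X Y),
      comp h (comp g f) = comp (comp h g) f;
  comp_id_l : forall (A B : Ob C) (f : Hom A B), comp (idm B) f = f;
  comp_id_r : forall (A B : Ob C) (f : Hom A B), comp f (idm A) = f;
  bang_uniq : forall (A : Ob C) (f g : Hom A term), f = g;
  p1_pair : forall (X A B : Ob C) (f : Hom X A) (g : Hom X B), comp p1 (pair f g) = f;
  p2_pair : forall (X A B : Ob C) (f : Hom X A) (g : Hom X B), comp p2 (pair f g) = g;
  pair_eta : forall (X A B : Ob C) (h : Hom X (prod A B)), pair (comp p1 h) (comp p2 h) = h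
}.

Definition is_weak_ev {C : CatData} (A B W : Ob C) (ev : Hom (prod W A) B) : Prop :=
  forall (X : Ob C) (h : Hom (prod X A) B),
    exists g : Hom X W, h = comp ev (pair (comp g p1) p2).

Record DocData (C : CatData) := {
  Pt : Ob C -> Type;
  le : forall A, Pt A -> Pt A -> Prop;
  top : forall A, Pt A;
  meet : forall A, Pt A -> Pt A -> Pt A;
  bot : forall A, Pt A;
  join : forall A, Pt A -> Pt A -> Pt A;
  impl : forall A, Pt A -> Pt A -> Pt A;
  re : forall A B, Hom A B -> Pt B -> Pt A;
  delta : forall A, Pt (prod A A);
  ex : forall X Y, Pt (prod X Y) -> Pt X;
  fa : forall X Y, Pt (prod X Y) -> Pt X
}.
Arguments Pt {C} _ _.
Arguments le {C d A} _ _.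
Arguments top {C d}_.
Arguments meet {C d A} _ _.
Arguments bot {C d}_.
Arguments join {C d A} _ _.
Arguments impl {C d A} _ _.
Arguments re {C d A B} _ _.
Arguments delta {C d}_.
Arguments ex {C d X Y} _.
Arguments fa {C d X Y} _.

Record WeakHyperdoctrine {C : CatData} (P : DocData C) : Prop := {
  le_refl : forall A (x : Pt P A), le x x;
  le_trans : forall A (x y z : Pt P A), le x y -> le y z -> le x z;
  le_antisym : forall A (x y : Pt P A), le x y -> le y x -> x = y;
  top_max : forall A (x : Pt P A), le x (top A);
  meet_glb : forall A (x y z : Pt P A), le z (meet x y) <-> (le z x /\ le z y);
  bot_min : forall A (x : Pt P A), le (bot A) x;
  join_lub : forall A (x y z : Pt P A), le (join x y) z <-> (le x z /\ le y z);
  impl_adj : forall A (x y z : Pt P A), le (meet z x) y <-> le z (impl x y);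
  re_mono : forall A B (f : Hom A B) (x y : Pt P B), le x y -> le (re f x) (re f y);
  re_id : forall A (x : Pt P A), re (idm A) x = x;
  re_comp : forall A B X (f : Hom A B) (g : Hom B X) (x : Pt P X),
      re (comp g f) x = re f (re g x);
  re_top : forall A B (f : Hom A B), re f (top (d:=P) B) = top A;
  re_meet : forall A B (f : Hom A B) (x y : Pt P B), re f (meet x y) = meet (re f x) (re f y);
  re_bot : forall A B (f : Hom A B), re f (bot (d:=P) B) = bot A;
  re_join : forall A B (f : Hom A B) (x y : Pt P B), re f (join x y) = join (re f x) (re f y);
  re_impl : forall A B (f : Hom A B) (x y : Pt P B), re f (impl x y) = impl (re f x) (re f y);
  (* elementary: P_<pr1,pr2>(-) /\ P_<pr2,pr3>(delta_A)  -|  P_<pr1,pr2,pr2>,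
     on P(X x A) -> P((X x A) x A) *)
  delta_adj : forall (X A : Ob C) (a : Pt P (prod X A)) (b : Pt P (prod (prod X A) A)),
      le (meet (re p1 a) (re (pair (comp p2 p1) p2) (delta A))) b
      <-> le a (re (pair (idm (prod X A)) p2) b);
  weak_cc : forall A B : Ob C, exists (W : Ob C) (ev : Hom (prod W A) B), is_weak_ev A B W ev;
  ex_adj : forall (X Y : Ob C) (a : Pt P (prod X Y)) (b : Pt P X),
      le (ex a) b <-> le a (re p1 b);
  fa_adj : forall (X Y : Ob C) (a : Pt P (prod X Y)) (b : Pt P X),
      le b (fa a) <-> le (re p1 b) a;
  ex_BC : forall (X' X Y : Ob C) (f : Hom X' X) (a : Pt P (prod X Y)),
      re f (ex a) = ex (re (pair (comp f p1) p2) a);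
  fa_BC : forall (X' X Y : Ob C) (f : Hom X' X) (a : Pt P (prod X Y)),
      re f (fa a) = fa (re (pair (comp f p1) p2) a)
}.

Definition comprehensive_diagonals {C : CatData} (P : DocData C) : Prop :=
  forall (X Y : Ob C) (f g : Hom X Y), le (top (d:=P) X) (re (pair f g) (delta (d:=P) Y)) -> f = g.

(* Axiom of Choice on A for P:
   forall a:A. exists b:B. R(a,b)  |-  exists f:W. forall a:A. R(a, ev(f,a))
   in the fibre over the terminal object (contexts 1 x A, 1 x W). *)
Definition AC {C : CatData} (P : DocData C) (A : Ob C) : Prop :=
  forall (B : Ob C) (R : Pt P (prod A B)) (W : Ob C) (ev : Hom (prod W A) B),
    is_weak_ev A B W ev ->
    le (fa (re (p2 (A := term) (B := A)) (ex R)))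
       (ex (re (p2 (A := term) (B := W)) (fa (re (pair p2 ev) R)))).

Definition eqrel {C : CatData} {P : DocData C} {A : Ob C} (r : Pt P (prod A A)) : Prop :=
  le (top (d:=P) A) (re (pair (idm A) (idm A)) r) /\
  le r (re (pair p2 p1) r) /\
  le (meet (re (pair (comp p1 p1) (comp p2 p1)) r) (re (pair (comp p2 p1) p2) r))
     (re (pair (comp p1 p1) p2) r).

(* alpha in \overline P(A, rho):  alpha(a) /\ rho(a,a') |- alpha(a') *)
Definition descent {C : CatData} {P : DocData C} {A : Ob C} (r : Pt P (prod A A))
  (a : Pt P A) : Prop :=
  le (meet (re p1 a) r) (re p2 a).

(* product object in Q_P: (A,rho) x (B,sigma) = (A x B, rho [x] sigma) *)
Definition prodrel {C : CatData} {P : DocData C} {A B : Ob C}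
  (r : Pt P (prod A A)) (s : Pt P (prod B B)) : Pt P (prod (prod A B) (prod A B)) :=
  meet (re (pair (comp p1 p1) (comp p1 p2)) r) (re (pair (comp p2 p1) (comp p2 p2)) s).

Definition preserves {C : CatData} {P : DocData C} {A B : Ob C}
  (r : Pt P (prod A A)) (s : Pt P (prod B B)) (f : Hom A B) : Prop :=
  le r (re (pair (comp f p1) (comp f p2)) s).

Definition arr_equiv {C : CatData} {P : DocData C} {A B : Ob C}
  (r : Pt P (prod A A)) (s : Pt P (prod B B)) (f g : Hom A B) : Prop :=
  le r (re (pair (comp f p1) (comp g p2)) s).

Definition is_weak_ev_bar {C : CatData} {P : DocData C} {A B W : Ob C}
  (r : Pt P (prod A A)) (s : Pt P (prod B B)) (w : Pt P (prod W W))
  (ev : Hom (prod W A) B) : Prop :=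
  eqrel w /\ preserves (prodrel w r) s ev /\
  forall (X : Ob C) (g : Pt P (prod X X)) (h : Hom (prod X A) B),
    eqrel g -> preserves (prodrel g r) s h ->
    exists k : Hom X W, preserves g w k /\
      arr_equiv (prodrel g r) s h (comp ev (pair (comp k p1) p2)).

(* b is the value at a of the left adjoint to \overline P_{pr1} along
   pr1 : (X,rX) x (Y,rY) -> (X,rX)  (a is assumed in \overline P(X x Y, rX [x] rY)) *)
Definition is_ex_bar {C : CatData} {P : DocData C} {X Y : Ob C}
  (rX : Pt P (prod X X)) (a : Pt P (prod X Y)) (b : Pt P X) : Prop :=
  descent rX b /\ forall c : Pt P X, descent rX c -> (le b c <-> le a (re p1 c)).

Definition is_fa_bar {C : CatData} {P : DocData C} {X Y : Ob C}
  (rX : Pt P (prod X X)) (a : Pt P (prod X Y)) (b : Pt P X) : Prop :=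
  descent rX b /\ forall c : Pt P X, descent rX c -> (le c b <-> le (re p1 c) a).

(* Axiom of Choice for \overline P on the object (A, delta_A) of Q_P;
   the terminal object of Q_P is (1, delta_1). *)
Definition AC_bar {C : CatData} (P : DocData C) (A : Ob C) : Prop :=
  forall (B : Ob C) (s : Pt P (prod B B)), eqrel s ->
  forall R : Pt P (prod A B), descent (prodrel (delta A) s) R ->
  forall (W : Ob C) (w : Pt P (prod W W)) (ev : Hom (prod W A) B),
    is_weak_ev_bar (delta A) s w ev ->
  forall (e1 : Pt P A) (u1 : Pt P term) (e2 : Pt P W) (u2 : Pt P term),
    is_ex_bar (delta A) R e1 ->                              (* exists b. R(a,b) *)
    is_fa_bar (delta term) (re (p2 (A := term) (B := A)) e1) u1 ->  (* forall a. ... *)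
    is_fa_bar w (re (pair p2 ev) R) e2 ->                     (* forall a. R(a,ev(f,a)) *)
    is_ex_bar (delta term) (re (p2 (A := term) (B := W)) e2) u2 ->  (* exists f. ... *)
    le u1 u2.

(* Main.v *)
Require Import Defs.
From Corelib Require Import ssreflect.

Section S.
Variable C : CatData.
Variable HC : CatLaws C.
Variable P : DocData C.
Variable HP : WeakHyperdoctrine P.

Lemma cA (A B X Y : Ob C) (f : Hom A B) (g : Hom B X) (h : Hom X Y) :
  comp (comp h g) f = comp h (comp g f).
Proof. symmetry; apply (comp_assoc C HC). Qed.
Lemma cidl (A B : Ob C) (f : Hom A B) : comp (idm B) f = f.
Proof. apply (comp_id_l C HC). Qed.
Lemma cidr (A B : Ob C) (f : Hom A B) : comp f (idm A) = f.
Proof. apply (comp_id_r C HC). Qed.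
Lemma p1p (X A B : Ob C) (f : Hom X A) (g : Hom X B) : comp p1 (pair f g) = f.
Proof. apply (p1_pair C HC). Qed.
Lemma p2p (X A B : Ob C) (f : Hom X A) (g : Hom X B) : comp p2 (pair f g) = g.
Proof. apply (p2_pair C HC). Qed.
Lemma peta (X A B : Ob C) (h : Hom X (prod A B)) : pair (comp p1 h) (comp p2 h) = h.
Proof. apply (pair_eta C HC). Qed.
Lemma pid (A B : Ob C) : pair (@p1 C A B) p2 = idm (prod A B).
Proof. rewrite <- (peta _ _ _ (idm _)). rewrite !cidr. reflexivity. Qed.
Lemma pc (Y X A B : Ob C) (f : Hom X A) (g : Hom X B) (h : Hom Y X) :
  comp (pair f g) h = pair (comp f h) (comp g h).
Proof. rewrite <- (peta _ _ _ (comp (pair f g) h)). rewrite !(comp_assoc C HC).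
  rewrite p1p p2p. reflexivity. Qed.

Lemma rmeet A B (f : Hom A B) (x y : Pt P B) : re f (meet x y) = meet (re f x) (re f y).
Proof. apply (re_meet _ HP). Qed.
Lemma rtop A B (f : Hom A B) : re f (top (d:=P) B) = top A.
Proof. apply (re_top _ HP). Qed.
Lemma rcomp A B X (f : Hom A B) (g : Hom B X) (x : Pt P X) : re f (re g x) = re (comp g f) x.
Proof. symmetry; apply (re_comp _ HP). Qed.
Lemma rid A (x : Pt P A) : re (idm A) x = x.
Proof. apply (re_id _ HP). Qed.



Notation dl := (delta (d:=P)).
Hint Rewrite cA cidl cidr p1p p2p peta pid pc rmeet rtop rcomp rid : pdb.

Tactic Notation "nrm" := autorewrite with pdb.
Tactic Notation "nrm" "in" hyp(H) := autorewrite with pdb in H.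

Lemma lr A (x : Pt P A) : le x x. Proof. apply (le_refl _ HP). Qed.
Lemma lt A (x y z : Pt P A) : le x y -> le y z -> le x z. Proof. apply (le_trans _ HP). Qed.
Lemma mL A (x y : Pt P A) : le (meet x y) x.
Proof. apply (proj1 (proj1 (meet_glb _ HP _ _ _ _) (lr _ _))). Qed.
Lemma mR A (x y : Pt P A) : le (meet x y) y.
Proof. apply (proj2 (proj1 (meet_glb _ HP _ _ _ _) (lr _ _))). Qed.
Lemma mI A (x y z : Pt P A) : le z x -> le z y -> le z (meet x y).
Proof. intros; apply (meet_glb _ HP); auto. Qed.
Lemma tI A (x : Pt P A) : le x (top A). Proof. apply (top_max _ HP). Qed.
Lemma rmono A B (f : Hom A B) (x y : Pt P B) : le x y -> le (re f x) (re f y).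
Proof. apply (re_mono _ HP). Qed.

Lemma LEIB0 (Z Y : Ob C) (phi : Pt P (prod Z Y)) :
  le (meet (re p1 phi) (re (pair (comp p2 p1) p2) (dl Y))) (re (pair (comp p1 p1) p2) phi).
Proof. apply (proj2 (delta_adj _ HP _ _ _ _)). nrm. apply lr. Qed.

Lemma LEIB (G Z Y : Ob C) (phi : Pt P (prod Z Y)) (x : Hom G Z) (t t' : Hom G Y) :
  le (meet (re (pair x t) phi) (re (pair t t') (dl Y))) (re (pair x t') phi).
Proof. have H := rmono _ _ (pair (pair x t) t') _ _ (LEIB0 _ _ phi). nrm in H. exact H. Qed.

Lemma REFL (G Y : Ob C) (t : Hom G Y) : le (top G) (re (pair t t) (dl Y)).
Proof.
  have H : le (top (prod G Y)) (re (pair (idm _) p2) (re (pair (comp p2 p1) p2) (dl Y))).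
  { apply (proj1 (delta_adj _ HP _ _ _ _)). apply mR. }
  have H2 := rmono _ _ (pair (idm G) t) _ _ H. nrm in H2. exact H2.
Qed.

Lemma LEIB1 (G Y : Ob C) (phi : Pt P Y) (t t' : Hom G Y) :
  le (meet (re t phi) (re (pair t t') (dl Y))) (re t' phi).
Proof. have H := LEIB _ _ _ (re p2 phi) (idm G) t t'. nrm in H. exact H. Qed.

Lemma SYM (G Y : Ob C) (t t' : Hom G Y) :
  le (re (pair t t') (dl Y)) (re (pair t' t) (dl Y)).
Proof.
  have H := LEIB _ _ _ (re (pair p2 p1) (dl Y)) t t t'. nrm in H.
  eapply lt; [|exact H]. apply mI; [eapply lt; [apply tI|apply REFL]|apply lr].
Qed.

Lemma TRANS (G Y : Ob C) (t t' t'' : Hom G Y) :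
  le (meet (re (pair t t') (dl Y)) (re (pair t' t'') (dl Y))) (re (pair t t'') (dl Y)).
Proof. apply LEIB. Qed.

Lemma CONG2 (G Z Y Y' : Ob C) (h : Hom (prod Z Y) Y') (x : Hom G Z) (t t' : Hom G Y) :
  le (re (pair t t') (dl Y)) (re (pair (comp h (pair x t)) (comp h (pair x t'))) (dl Y')).
Proof.
  have H := LEIB _ _ _ (re (pair (comp h (pair (comp x p1) (comp t p1))) (comp h (pair (comp x p1) p2))) (dl Y')) (idm G) t t'.
  nrm in H. eapply lt; [|exact H]. apply mI; [eapply lt; [apply tI|apply REFL]|apply lr].
Qed.

Lemma DESC_DELTA (A : Ob C) (c : Pt P A) : descent (dl A) c.
Proof. unfold descent. have H := LEIB1 _ _ c p1 p2. nrm in H. exact H. Qed.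

Lemma DESC_TERM (c : Pt P (@term C)) : descent (dl term) c.
Proof. unfold descent. replace (@p2 C term term) with (@p1 C term term) by apply (bang_uniq C HC).
  apply mL. Qed.

Lemma eqrel_delta (Y : Ob C) : eqrel (dl Y).
Proof.
  split; [|split].
  - apply REFL.
  - have H := SYM _ _ (@p1 C Y Y) p2. nrm in H. exact H.
  - apply TRANS.
Qed.

Lemma FA_ELIM_AT (G X Y : Ob C) (K : Pt P (prod X Y)) (h : Hom G X) (a : Hom G Y) :
  le (re h (fa K)) (re (pair h a) K).
Proof.
  have H0 : le (re p1 (fa K)) K by apply (fa_adj _ HP); apply lr.
  have H := rmono _ _ (pair h a) _ _ H0. nrm in H. exact H.
Qed.

Lemma FA_I (G X Y : Ob C) (c : Pt P G) (h : Hom G X) (K : Pt P (prod X Y)) :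
  le (re p1 c) (re (pair (comp h p1) p2) K) -> le c (re h (fa K)).
Proof. intro H. rewrite (fa_BC _ HP). apply (fa_adj _ HP). exact H. Qed.

Lemma EX_I_AT (G X Y : Ob C) (K : Pt P (prod X Y)) (h : Hom G X) (a : Hom G Y) :
  le (re (pair h a) K) (re h (ex K)).
Proof.
  have H0 : le K (re p1 (ex K)) by apply (ex_adj _ HP); apply lr.
  have H := rmono _ _ (pair h a) _ _ H0. nrm in H. exact H.
Qed.

Lemma DESC_AT (A B : Ob C) (r : Pt P (prod A A)) (s : Pt P (prod B B)) (R : Pt P (prod A B)) :
  descent (prodrel r s) R -> forall (G : Ob C) (a a' : Hom G A) (b b' : Hom G B),
  le (meet (re (pair a b) R) (meet (re (pair a a') r) (re (pair b b') s))) (re (pair a' b') R).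
Proof. unfold descent, prodrel. intros H G a a' b b'.
  have H2 := rmono _ _ (pair (pair a b) (pair a' b')) _ _ H. nrm in H2. exact H2. Qed.

Lemma PRES_AT (A B : Ob C) (r : Pt P (prod A A)) (s : Pt P (prod B B)) (f : Hom A B) :
  preserves r s f -> forall (G : Ob C) (x x' : Hom G A),
  le (re (pair x x') r) (re (pair (comp f x) (comp f x')) s).
Proof. unfold preserves. intros H G x x'.
  have H2 := rmono _ _ (pair x x') _ _ H. nrm in H2. exact H2. Qed.

Lemma REL_PRES (Y B : Ob C) (s : Pt P (prod B B)) (h : Hom Y B) :
  le (top B) (re (pair (idm B) (idm B)) s) ->
  le (dl Y) (re (pair (comp h p1) (comp h p2)) s).
Proof.
  intro Hs.
  have H := LEIB _ _ _ (re (pair (comp h (comp p1 p1)) (comp h p2)) s) (idm (prod Y Y)) p1 p2.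
  nrm in H. eapply lt; [|exact H]. apply mI; [|apply lr].
  have H2 := rmono _ _ (comp h (@p1 C Y Y)) _ _ Hs. nrm in H2. eapply lt; [apply tI|exact H2].
Qed.

Lemma PRODDELTA (X Y : Ob C) :
  le (prodrel (dl X) (dl Y)) (dl (prod X Y)).
Proof.
  unfold prodrel.
  have H1 := LEIB _ _ _ (re (pair (comp p1 p1) (pair p2 (comp p2 (comp p1 p1)))) (dl (prod X Y)))
     (idm _) (comp (@p1 C X Y) (@p1 C (prod X Y) (prod X Y))) (comp p1 p2).
  have H2 := LEIB _ _ _ (re (pair (comp p1 p1) (pair (comp p1 (comp p2 p1)) p2)) (dl (prod X Y)))
     (idm _) (comp (@p2 C X Y) (@p1 C (prod X Y) (prod X Y))) (comp p2 p2).
  nrm in H1. nrm in H2.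
  eapply lt; [|exact H2]. apply mI; [|apply mR].
  eapply lt; [|exact H1]. apply mI; [|apply mL].
  eapply lt; [apply tI|]. have H3 := REFL _ _ (@p1 C (prod X Y) (prod X Y)). nrm in H3. exact H3.
Qed.

Lemma FDESC (A B W : Ob C) (s : Pt P (prod B B)) (R : Pt P (prod A B)) (w : Pt P (prod W W)) (ev : Hom (prod W A) B) :
  descent (prodrel (dl A) s) R -> preserves (prodrel w (dl A)) s ev -> descent w (fa (re (pair p2 ev) R)).
Proof.
 intros HR Hev. unfold descent. apply FA_I. nrm.
 have H1 := FA_ELIM_AT _ _ _ (re (pair p2 ev) R) (comp (@p1 C W W) (@p1 C (prod W W) A)) p2. nrm in H1.
 have H2 := PRES_AT _ _ _ _ _ Hev (prod (prod W W) A) (pair (comp p1 p1) p2) (pair (comp p2 p1) p2).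
 unfold prodrel in H2; nrm in H2.
 have H3 := DESC_AT _ _ _ _ _ HR (prod (prod W W) A) p2 p2 (comp ev (pair (comp p1 p1) p2)) (comp ev (pair (comp p2 p1) p2)).
 nrm in H3.
 eapply lt; [|exact H3]. apply mI; [eapply lt; [apply mL|exact H1]|].
 apply mI; [eapply lt; [apply tI|apply REFL]|].
 eapply lt; [|exact H2]. apply mI; [apply mR|eapply lt; [apply tI|apply REFL]].
Qed.

Definition Ker (W A B : Ob C) (ev : Hom (prod W A) B) : Pt P (prod (prod W W) A) :=
  re (pair (comp ev (pair (comp p1 p1) p2)) (comp ev (pair (comp p2 p1) p2))) (dl B).

Lemma KER_EQ (W A B : Ob C) (ev : Hom (prod W A) B) : eqrel (fa (Ker W A B ev)).
Proof.
  unfold Ker. split; [|split].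
  - apply FA_I. nrm. apply lt with (top (prod W A)); [apply tI|apply REFL].
  - apply FA_I. nrm.
    have H1 := FA_ELIM_AT _ _ _ (Ker W A B ev) (@p1 C (prod W W) A) p2. unfold Ker in H1. nrm in H1.
    eapply lt; [exact H1|apply SYM].
  - apply FA_I. nrm.
    have H1 := FA_ELIM_AT _ _ _ (Ker W A B ev) (comp (@p1 C (prod W W) W) (@p1 C (prod (prod W W) W) A)) p2.
    have H2 := FA_ELIM_AT _ _ _ (Ker W A B ev) (pair (comp (@p2 C W W) (comp (@p1 C (prod W W) W) (@p1 C (prod (prod W W) W) A))) (comp p2 p1)) p2.
    unfold Ker in H1, H2. nrm in H1. nrm in H2.
    eapply lt; [|apply TRANS]. apply mI; [eapply lt; [apply mL|exact H1]|eapply lt; [apply mR|exact H2]].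
Qed.

Lemma FWD (A : Ob C) : AC P A -> AC_bar P A.
Proof.
intros HAC B s Hs R HR W w ev [Hw [Hevp Hevu]] e1 u1 e2 u2 He1 Hu1 He2 Hu2.
destruct (weak_cc _ HP A B) as [W' [ev' Hev']].
have Hev'p : preserves (prodrel (dl W') (dl A)) s ev'.
{ unfold preserves. eapply lt; [apply PRODDELTA|]. apply REL_PRES. exact (proj1 Hs). }
destruct (Hevu W' (dl W') ev' (eqrel_delta W') Hev'p) as [k [_ Hk]].
have HF := FDESC _ _ _ _ _ _ _ HR Hevp.
have He2F : le (fa (re (pair p2 ev) R)) e2.
{ destruct He2 as [_ He2]. apply (proj2 (He2 _ HF)). apply (fa_adj _ HP). apply lr. }
have Hu1' : le u1 (fa (re p2 (ex R))).
{ destruct Hu1 as [_ Hu1]. destruct He1 as [_ He1].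
  have H1 := proj1 (Hu1 u1 (DESC_TERM u1)) (lr _ _).
  have H2 : le e1 (ex R). { apply (proj2 (He1 (ex R) (DESC_DELTA _ _))). apply (ex_adj _ HP); apply lr. }
  apply (fa_adj _ HP). eapply lt; [exact H1|]. apply rmono; exact H2. }
have Hu2' : le (ex (re p2 (fa (re (pair p2 ev') R)))) u2.
{ destruct Hu2 as [_ Hu2]. have H3 := proj1 (Hu2 u2 (DESC_TERM u2)) (lr _ _).
  apply (ex_adj _ HP).
  have H4 := rmono _ _ (pair (@p1 C term W') (comp k p2)) _ _ H3. nrm in H4.
  eapply lt; [|exact H4].
  have H5 : le (fa (re (pair p2 ev') R)) (re k e2).
  { eapply lt; [|apply rmono; exact He2F]. apply FA_I. nrm.
    have H6 := FA_ELIM_AT _ _ _ (re (pair p2 ev') R) (@p1 C W' A) p2. nrm in H6.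
    eapply lt; [exact H6|].
    have H7 := DESC_AT _ _ _ _ _ HR (prod W' A) p2 p2 ev' (comp ev (pair (comp k p1) p2)).
    nrm in H7. eapply lt; [|exact H7]. apply mI; [apply lr|]. apply mI; [eapply lt; [apply tI|apply REFL]|].
    unfold arr_equiv, prodrel in Hk. have H8 := rmono _ _ (pair (idm (prod W' A)) (idm _)) _ _ Hk. nrm in H8.
    eapply lt; [|exact H8]. apply mI; (eapply lt; [apply tI|apply REFL]). }
  have H9 := rmono _ _ (@p2 C term W') _ _ H5. nrm in H9. exact H9. }
eapply lt; [exact Hu1'|]. eapply lt; [apply HAC; exact Hev'|exact Hu2'].
Qed.

Lemma BWD (A : Ob C) : AC_bar P A -> AC P A.
Proof.
intros Hbar B R W ev Hev.
have HR : descent (prodrel (dl A) (dl B)) R.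
{ unfold descent. eapply lt; [|apply (DESC_DELTA _ R)]. apply mI; [apply mL|eapply lt; [apply mR|apply PRODDELTA]]. }
have Hevp : preserves (prodrel (fa (Ker W A B ev)) (dl A)) (dl B) ev.
{ unfold preserves, prodrel.
  have H1 := FA_ELIM_AT _ _ _ (Ker W A B ev) (pair (comp (@p1 C W A) (@p1 C (prod W A) (prod W A))) (comp p1 p2)) (comp p2 p1).
  have H2 := CONG2 _ _ _ _ ev (comp (@p1 C W A) (@p2 C (prod W A) (prod W A))) (comp p2 p1) (comp p2 p2).
  unfold Ker in H1. nrm in H1. nrm in H2.
  eapply lt; [|apply TRANS]. apply mI; [eapply lt; [apply mL|exact H1]|eapply lt; [apply mR|exact H2]]. }
refine (Hbar B (dl B) (eqrel_delta B) R HR W (fa (Ker W A B ev)) ev _ (ex R) (fa (re p2 (ex R)))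
  (fa (re (pair p2 ev) R)) (ex (re p2 (fa (re (pair p2 ev) R)))) _ _ _ _).
- split; [apply KER_EQ|split; [exact Hevp|]].
  intros X g h Hg Hh. destruct (Hev X h) as [k ->]. exists k. split; [|exact Hh].
  unfold preserves. unfold Ker. apply FA_I. nrm.
  have H := PRES_AT _ _ _ _ _ Hh ((prod (prod X X) A)) (pair (comp p1 p1) p2) (pair (comp p2 p1) p2).
  unfold prodrel in H; nrm in H. eapply lt; [|exact H]. apply mI; [apply lr|eapply lt; [apply tI|apply REFL]].
- split; [apply DESC_DELTA|]. intros c _. apply (ex_adj _ HP).
- split; [apply DESC_TERM|]. intros c _. apply (fa_adj _ HP).
- split; [exact (FDESC _ _ _ _ _ _ _ HR Hevp)|]. intros c _. apply (fa_adj _ HP).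
- split; [apply DESC_TERM|]. intros c _. apply (ex_adj _ HP).
Qed.
End S.

Theorem proposition3p12 (C : CatData) (HC : CatLaws C) (P : DocData C)
  (HP : WeakHyperdoctrine P) (Hcd : comprehensive_diagonals P) (A : Ob C) :
  AC P A <-> AC_bar P A.
Proof.
  split; [apply (FWD C HC P HP A)|apply (BWD C HC P HP A)].
Qed.
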